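(* Let $(\mathfrak g,[\,,\,]_{\mathfrak g})$ be a Lie algebra. There is a compatible PostLie algebra structure on $\mathfrak g$ if and only if there exist a $\mathfrak g$-Lie algebra $(\mathfrak k,\pi)$ and an invertible $\mathcal O$-operator $r:\mathfrak k\to\mathfrak g$ of weight $1$.
   Context: A PostLie algebra is a vector space $L$ with bilinear $\circ,[\,,\,]$ satisfying, for all $x,y,z$: $[x,y]=-[y,x]$; $[[x,y],z]+[[z,x],y]+[[y,z],x]=0$; $z\circ(y\circ x)-y\circ(z\circ x)+(y\circ z)\circ x-(z\circ y)\circ x+[y,z]\circ x=0$; $z\circ[x,y]-[z\circ x,y]-[x,z\circ y]=0$. A compatible PostLie algebra structure on $\mathfrak g$ is a PostLie algebra structure $(\circ,[\,,\,])$ on the underlying vector space of $\mathfrak g$ with $x\circ y-y\circ x+[x,y]=[x,y]_{\mathfrak g}$ for all $x,y$. A $\mathfrak g$-Lie algebra $(\mathfrak k,\pi)$ is a Lie algebra $\mathfrak k$ with a Lie algebra homomorphism $\pi:\mathfrak g\to\mathrm{Der}(\mathfrak k)$; an $\mathcal O$-operator of weight $\lambda$ is a linear $r:\mathfrak k\to\mathfrak g$ with $[r(x),r(y)]_{\mathfrak g}=r(\pi(r(x))y-\pi(r(y))x+\lambda[x,y]_{\mathfrak k})$. *)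

(* Defs.v *)
From HB Require Import structures.
From mathcomp Require Import all_boot all_order all_algebra.
Set Implicit Arguments. Unset Strict Implicit. Unset Printing Implicit Defensive.
Import GRing.Theory.
Local Open Scope ring_scope.

Section Defs.
Variable F : fieldType.

Definition bilinear_map (U V W : lmodType F) (f : U -> V -> W) : Prop :=
  (forall (a : F) (x y : U) (z : V), f (a *: x + y) z = a *: f x z + f y z) /\
  (forall (a : F) (x : U) (y z : V), f x (a *: y + z) = a *: f x y + f x z).

Definition linear_map (U V : lmodType F) (f : U -> V) : Prop :=
  forall (a : F) (x y : U), f (a *: x + y) = a *: f x + f y.

Definition is_lie_algebra (V : lmodType F) (br : V -> V -> V) : Prop :=
  [/\ bilinear_map br,
      (forall x y, br x y = - br y x) &
      (forall x y z, br (br x y) z + br (br z x) y + br (br y z) x = 0)].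

Definition is_postlie (V : lmodType F) (circ br : V -> V -> V) : Prop :=
  [/\ bilinear_map circ, bilinear_map br,
      is_lie_algebra br,
      (forall x y z, circ z (circ y x) - circ y (circ z x) + circ (circ y z) x
                      - circ (circ z y) x + circ (br y z) x = 0) &
      (forall x y z, circ z (br x y) - br (circ z x) y - br x (circ z y) = 0)].

Definition compatible_postlie (V : lmodType F) (brg : V -> V -> V)
    (circ br : V -> V -> V) : Prop :=
  is_postlie circ br /\ (forall x y, circ x y - circ y x + br x y = brg x y).

Definition is_derivation (K : lmodType F) (brk : K -> K -> K) (D : K -> K) : Prop :=
  linear_map D /\ (forall x y, D (brk x y) = brk (D x) y + brk x (D y)).

(* (K, brk, pi) is a g-Lie algebra, where (V, brg) = g: K is a Lie algebra and
   pi : g -> Der(K) is a Lie algebra homomorphism (Der(K) with commutator bracket) *)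
Definition is_g_lie_algebra (V : lmodType F) (brg : V -> V -> V)
    (K : lmodType F) (brk : K -> K -> K) (pi : V -> K -> K) : Prop :=
  [/\ is_lie_algebra brk,
      (forall x, is_derivation brk (pi x)),
      (forall (a : F) x y k, pi (a *: x + y) k = a *: pi x k + pi y k) &
      (forall x y k, pi (brg x y) k = pi x (pi y k) - pi y (pi x k))].

Definition is_O_operator (V : lmodType F) (brg : V -> V -> V)
    (K : lmodType F) (brk : K -> K -> K) (pi : V -> K -> K) (lam : F)
    (r : K -> V) : Prop :=
  linear_map r /\
  (forall x y, brg (r x) (r y) = r (pi (r x) y - pi (r y) x + lam *: brk x y)).

End Defs.

(* Main.v *)
Require Import Defs.
From HB Require Import structures.
From mathcomp Require Import all_boot all_order all_algebra.
Import GRing.Theory.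
Local Open Scope ring_scope.

Set Implicit Arguments. Unset Strict Implicit.
Section Help.
Variable F : fieldType.

Lemma lm0 (U W : lmodType F) (f : U -> W) : linear_map f -> f 0 = 0.
Proof.
move=> h; have := h 1 0 0; rewrite !scale1r addr0.
move=> e; by rewrite -[f 0](addrK (f 0)) -e subrr.
Qed.

Lemma lmD (U W : lmodType F) (f : U -> W) : linear_map f ->
  forall x y, f (x + y) = f x + f y.
Proof. by move=> h x y; have := h 1 x y; rewrite !scale1r. Qed.

Lemma lmN (U W : lmodType F) (f : U -> W) : linear_map f ->
  forall x, f (- x) = - f x.
Proof.
move=> h x; have := h (-1) x 0; rewrite !addr0 (lm0 h) addr0 !scaleN1r.
by [].
Qed.

Lemma lmB (U W : lmodType F) (f : U -> W) : linear_map f ->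
  forall x y, f (x - y) = f x - f y.
Proof. by move=> h x y; rewrite (lmD h) (lmN h). Qed.

Lemma lmZ (U W : lmodType F) (f : U -> W) : linear_map f ->
  forall a x, f (a *: x) = a *: f x.
Proof. by move=> h a x; have := h a x 0; rewrite !addr0 (lm0 h) addr0. Qed.

End Help.

Theorem corollary5p5 (F : fieldType) (V : lmodType F) (brg : V -> V -> V)
    (hg : is_lie_algebra brg) :
  (exists circ br : V -> V -> V, compatible_postlie brg circ br) <->
  (exists (K : lmodType F) (brk : K -> K -> K) (pi : V -> K -> K) (r : K -> V),
      [/\ is_g_lie_algebra brg brk pi, is_O_operator brg brk pi 1 r & bijective r]).
Proof.
split.
- move=> [circ [br [[[c1 c2] hb hbr h3 h4] hc]]].
  have cL k : linear_map (fun u => circ u k) by move=> a u v; apply: c1.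
  exists V, br, circ, id; split.
  + split => //.
    * move=> x; split; first by move=> a u v; apply: c2.
      move=> y z; have := h4 y z x; move/subr0_eq/eqP; rewrite subr_eq => /eqP ->.
      by rewrite addrC.
    * move=> x y k; rewrite -hc (lmD (cL k)) (lmB (cL k)).
      set P := circ y (circ x k); set Q := circ x (circ y k).
      have H := h3 k x y; rewrite -/P -/Q in H.
      apply: (@addrI _ (P - Q)).
      rewrite [RHS]addrA subrK subrr !addrA; exact: H.
  + split; first by [].
    by move=> x y; rewrite scale1r hc.
  + by exists id.
- move=> [K [brk [pi [r [[hk hder hpi hhom] [rL hO] [g rK gK]]]]]].
  have gL : linear_map g.
    move=> a x y.
    by rewrite -{1}(gK x) -{1}(gK y) -rL rK.
  have piL k : linear_map (fun u => pi u k) by move=> a u v; apply: hpi.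
  case: hk => [[bk1 bk2] bkA bkJ].
  exists (fun a b => r (pi a (g b))), (fun a b => r (brk (g a) (g b))).
  split; first split.
  + split.
    * by move=> a x y z /=; rewrite hpi rL.
    * by move=> a x y z /=; rewrite gL (hder x).1 rL.
  + split.
    * by move=> a x y z /=; rewrite gL bk1 rL.
    * by move=> a x y z /=; rewrite gL bk2 rL.
  + split.
    * split.
      - by move=> a x y z /=; rewrite gL bk1 rL.
      - by move=> a x y z /=; rewrite gL bk2 rL.
    * by move=> x y /=; rewrite bkA (lmN rL).
    * move=> x y z /=; rewrite !rK -!(lmD rL).
      by rewrite bkJ (lm0 rL).
  + move=> x0 y0 z0 /=.
    rewrite -(gK x0) -(gK y0) -(gK z0); move: (g x0) (g y0) (g z0) => x y z.
    rewrite !rK.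
    have E : r (pi (r (pi (r y) z)) x) + (- r (pi (r (pi (r z) y)) x) + r (pi (r (brk y z)) x))
       = r (pi (r y) (pi (r z) x)) - r (pi (r z) (pi (r y) x)).
      rewrite -(lmB rL) -hhom hO scale1r (lmD rL) (lmB rL) (lmD (piL x)) (lmB (piL x)).
      by rewrite (lmD rL) (lmB rL) addrA.
    by rewrite -!addrA E addKr subrr.
  + move=> x y z /=; rewrite !rK (hder z).2 (lmD rL).
    by rewrite [r _ + r _ - _]addrC addKr subrr.
  + move=> x0 y0 /=.
    rewrite -(gK x0) -(gK y0); move: (g x0) (g y0) => x y.
    by rewrite !rK hO scale1r (lmD rL) (lmB rL).
Qed.
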